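(* Let $\mathbb{Q}_0,\mathbb{Q}_1$ be posets, $D_0$ a non-principal ultrafilter on $\omega$, and $Q_0\subseteq\mathbb{Q}_0$, $Q_1\subseteq\mathbb{Q}_1$ be $D_0$-linked subsets. Then $Q_0\times Q_1$ is $D_0$-linked in $\mathbb{Q}_0\times\mathbb{Q}_1$. In particular: (a) for any infinite cardinal $\mu$, the product of two $\mu$-$D_0$-linked posets is $\mu$-$D_0$-linked; (b) if $\theta$ is regular, the product of two $\theta$-$D_0$-Knaster posets is $\theta$-$D_0$-Knaster. The analogous statements hold with ''uf-linked'' in place of ''$D_0$-linked'' and ''uf-Knaster'' in place of ''$D_0$-Knaster''.
   Context: For a poset $\mathbb{P}$ and $\bar p=\langle p_n:n<\omega\rangle$ in $\mathbb{P}$, $\dot W(\bar p)$ names $\{n:p_n\in\dot G\}$. For a filter $F$ on $\omega$ containing the cofinite sets, $F^+$ is the family of subsets of $\omega$ meeting every member of $F$. $Q\subseteq\mathbb{P}$ is $F$-linked if for every sequence $\bar p$ in $Q$ there is $q\in\mathbb{P}$ forcing $\dot W(\bar p)\in F^+$; $Q$ is uf-linked if it is $D$-linked for every non-principal ultrafilter $D$ on $\omega$. $\mathbb{P}$ is $\mu$-$F$-linked ($\mu$-uf-linked) if it is the union of $\mu$ many $F$-linked (uf-linked) subsets; $\mathbb{P}$ is $\theta$-$F$-Knaster ($\theta$-uf-Knaster) if every subset of size $\theta$ contains an $F$-linked (uf-linked) subset of size $\theta$. *)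

(* Defs.v *)
(* Forcing notions are posets (P, le), "le p q" meaning p is
   stronger than (extends) q.  Subsets of omega are predicates nat -> Prop. *)
From Stdlib Require Import Arith.

Definition is_poset {P : Type} (le : P -> P -> Prop) : Prop :=
  (forall p, le p p) /\
  (forall p q r, le p q -> le q r -> le p r) /\
  (forall p q, le p q -> le q p -> p = q).

Definition prod_le {P0 P1 : Type} (le0 : P0 -> P0 -> Prop) (le1 : P1 -> P1 -> Prop)
  (x y : P0 * P1) : Prop := le0 (fst x) (fst y) /\ le1 (snd x) (snd y).

Definition setX {P0 P1 : Type} (Q0 : P0 -> Prop) (Q1 : P1 -> Prop) (x : P0 * P1) : Prop :=
  Q0 (fst x) /\ Q1 (snd x).

Definition is_filter (F : (nat -> Prop) -> Prop) : Prop :=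
  F (fun _ => True) /\ ~ F (fun _ => False) /\
  (forall A B, F A -> (forall n, A n -> B n) -> F B) /\
  (forall A B, F A -> F B -> F (fun n => A n /\ B n)).

Definition contains_cofinite (F : (nat -> Prop) -> Prop) : Prop :=
  forall A : nat -> Prop, (exists N, forall m, N <= m -> A m) -> F A.

Definition nonprincipal_ultrafilter (D : (nat -> Prop) -> Prop) : Prop :=
  is_filter D /\ contains_cofinite D /\
  (forall A : nat -> Prop, D A \/ D (fun n => ~ A n)).

Definition compat {P : Type} (le : P -> P -> Prop) (p q : P) : Prop :=
  exists r, le r p /\ le r q.

(* q forces  W(pbar) = {n | pbar n \in G} \in F^+ , i.e. q forces that W(pbar)
   meets every (ground-model) member of F.  Unfolded forcing relation: for each
   a \in F, the set {pbar n | n \in a} is predense below q. *)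
Definition forces_W_in_Fplus {P : Type} (le : P -> P -> Prop)
  (F : (nat -> Prop) -> Prop) (pbar : nat -> P) (q : P) : Prop :=
  forall a, F a -> forall r, le r q -> exists n, a n /\ compat le r (pbar n).

Definition F_linked {P : Type} (le : P -> P -> Prop) (F : (nat -> Prop) -> Prop)
  (Q : P -> Prop) : Prop :=
  forall pbar : nat -> P, (forall n, Q (pbar n)) ->
    exists q : P, forces_W_in_Fplus le F pbar q.

Definition uf_linked {P : Type} (le : P -> P -> Prop) (Q : P -> Prop) : Prop :=
  forall D, nonprincipal_ultrafilter D -> F_linked le D Q.

(* cardinals represented by types *)
Definition card_le (A B : Type) : Prop := exists f : A -> B, forall x y, f x = f y -> x = y.
Definition card_lt (A B : Type) : Prop := card_le A B /\ ~ card_le B A.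
Definition infinite_type (I : Type) : Prop := card_le nat I.

Definition regular_type (Th : Type) : Prop :=
  infinite_type Th /\
  forall (J : Type) (S : J -> Th -> Prop),
    card_lt J Th -> (forall j, card_lt {t : Th | S j t} Th) ->
    exists t : Th, forall j, ~ S j t.

Definition has_size {P : Type} (A : P -> Prop) (Th : Type) : Prop :=
  exists f : Th -> P, (forall x y, f x = f y -> x = y) /\
                      (forall p, A p <-> exists t, f t = p).

Definition mu_linked {P : Type} (L : (P -> Prop) -> Prop) (I : Type) : Prop :=
  exists Qs : I -> P -> Prop, (forall i, L (Qs i)) /\ (forall p, exists i, Qs i p).

Definition theta_Knaster {P : Type} (L : (P -> Prop) -> Prop) (Th : Type) : Prop :=
  forall A : P -> Prop, has_size A Th ->
    exists B : P -> Prop, (forall p, B p -> A p) /\ has_size B Th /\ L B.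

(* Main.v *)
Require Import Defs.
From Stdlib Require Import Classical ClassicalEpsilon FunctionalExtensionality Cantor.
From mathcomp Require classical_sets.

Definition inj {A B} (f : A -> B) := forall x y, f x = f y -> x = y.

Lemma zorn {T : Type} (P : (T -> Prop) -> Prop) :
  (forall F : (T -> Prop) -> Prop, (forall X, F X -> P X) ->
     (forall X Y, F X -> F Y -> (forall t, X t -> Y t) \/ (forall t, Y t -> X t)) ->
     P (fun t => exists2 X, F X & X t)) ->
  exists A, P A /\ forall B, (forall t, A t -> B t) -> P B -> forall t, B t -> A t.
Proof.
  intros H. destruct (classical_sets.Zorn_bigcup (P:=P) H) as [A [PA M]].
  exists A; split; auto. intros B AB PB.
  apply NNPP; intro nBA. apply (M B); auto. split; auto.
Qed.

Lemma comparable (X Y : Type) : (exists f : X -> Y, inj f) \/ (exists g : Y -> X, inj g).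
Proof.
  set (P := fun R : X * Y -> Prop =>
     (forall x y y', R (x,y) -> R (x,y') -> y = y') /\
     (forall x x' y, R (x,y) -> R (x',y) -> x = x')).
  destruct (zorn P) as [R [[Rf Ri] M]].
  - intros F FP Fc. split.
    + intros x y y' [S1 F1 H1] [S2 F2 H2].
      destruct (Fc _ _ F1 F2) as [E|E].
      * apply (proj1 (FP _ F2) x); auto.
      * apply (proj1 (FP _ F1) x); auto.
    + intros x x' y [S1 F1 H1] [S2 F2 H2].
      destruct (Fc _ _ F1 F2) as [E|E].
      * apply (proj2 (FP _ F2) _ _ y); auto.
      * apply (proj2 (FP _ F1) _ _ y); auto.
  - destruct (classic (forall x, exists y, R (x,y))) as [Hx|Hx].
    + left. exists (fun x => proj1_sig (constructive_indefinite_description _ (Hx x))).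
      intros a b E.
      destruct (constructive_indefinite_description _ (Hx a)) as [ya Ha].
      destruct (constructive_indefinite_description _ (Hx b)) as [yb Hb].
      simpl in E; subst. eapply Ri; eauto.
    + destruct (classic (forall y, exists x, R (x,y))) as [Hy|Hy].
      * right. exists (fun y => proj1_sig (constructive_indefinite_description _ (Hy y))).
        intros a b E.
        destruct (constructive_indefinite_description _ (Hy a)) as [ya Ha].
        destruct (constructive_indefinite_description _ (Hy b)) as [yb Hb].
        simpl in E; subst. eapply Rf; eauto.
      * exfalso. apply not_all_ex_not in Hx as [x0 Hx0].
        apply not_all_ex_not in Hy as [y0 Hy0].
        set (R' := fun z => R z \/ z = (x0,y0)).
        assert (PR : P R').
        { split.
          - intros x y y' [H1|H1] [H2|H2]; try congruence.
            + eapply Rf; eauto.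
            + inversion H2; subst. exfalso; eauto.
            + inversion H1; subst. exfalso; eauto.
          - intros x x' y [H1|H1] [H2|H2]; try congruence.
            + eapply Ri; eauto.
            + inversion H2; subst. exfalso; eauto.
            + inversion H1; subst. exfalso; eauto. }
        assert (R (x0,y0)) by (apply (M R'); unfold R'; auto).
        eauto.
Qed.

Local Opaque to_nat.
Section Sq.
Variable I : Type.
Variable e : nat -> I.
Hypothesis e_inj : inj e.

Let inh : inhabited I := inhabits (e 0).

Definition Dm (S : (I*I)*I -> Prop) x := exists k, S ((x,x),k).
Definition invS (S : (I*I)*I -> Prop) :=
  (forall p k k', S (p,k) -> S (p,k') -> k = k') /\
  (forall p p' k, S (p,k) -> S (p',k) -> p = p') /\
  (forall x y, (Dm S x /\ Dm S y) <-> exists k, S ((x,y),k)) /\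
  (forall p k, S (p,k) -> Dm S k).
Definition S0 (z : (I*I)*I) := exists a b, z = ((e a, e b), e (to_nat (a,b))).
Definition PS S := invS S /\ ((forall z, ~ S z) \/ (forall z, S0 z -> S z)).

Lemma S0_Dm x : Dm S0 x <-> exists a, x = e a.
Proof.
  split.
  - intros [k [a [b E]]]. injection E as Ei Ej Ek. eauto.
  - intros [a ->]. exists (e (to_nat (a,a))). exists a, a. reflexivity.
Qed.

Lemma inv_S0 : invS S0.
Proof.
  split; [|split; [|split]].
  - intros [i j] k k' [a [b E]] [a' [b' E']].
    injection E as Ei Ej Ek. injection E' as Ei' Ej' Ek'.
    rewrite Ei in Ei'. rewrite Ej in Ej'. apply e_inj in Ei'. apply e_inj in Ej'.
    subst. reflexivity.
  - intros [i j] [i' j'] k [a [b E]] [a' [b' E']].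
    injection E as Ei Ej Ek. injection E' as Ei' Ej' Ek'.
    rewrite Ek in Ek'. apply e_inj in Ek'.
    assert (HH := cancel_of_to (a,b)). rewrite Ek' in HH.
    rewrite cancel_of_to in HH. injection HH as H1 H2. subst. reflexivity.
  - intros x y. rewrite !S0_Dm. split.
    + intros [[a ->] [b ->]]. exists (e (to_nat (a,b))). exists a, b; reflexivity.
    + intros [k [a [b E]]]. injection E as Ei Ej Ek. subst. eauto.
  - intros [i j] k [a [b E]]. injection E as Ei Ej Ek. subst. apply S0_Dm. eauto.
Qed.

Lemma PS_chain : forall F : ((I*I)*I -> Prop) -> Prop, (forall X, F X -> PS X) ->
     (forall X Y, F X -> F Y -> (forall t, X t -> Y t) \/ (forall t, Y t -> X t)) ->
     PS (fun t => exists2 X, F X & X t).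
Proof.
  intros F FP Fc. set (U := fun t => exists2 X, F X & X t).
  assert (DU : forall x, Dm U x <-> exists2 S, F S & Dm S x).
  { intro x; split.
    - intros [k [S FS H]]. exists S; auto. exists k; auto.
    - intros [S FS [k H]]. exists k. exists S; auto. }
  split; [split; [|split; [|split]]|].
  - intros p k k' [S1 F1 H1] [S2 F2 H2].
    destruct (Fc _ _ F1 F2) as [E|E].
    + apply (proj1 (proj1 (FP _ F2)) p); auto.
    + apply (proj1 (proj1 (FP _ F1)) p); auto.
  - intros p p' k [S1 F1 H1] [S2 F2 H2].
    destruct (Fc _ _ F1 F2) as [E|E].
    + apply (proj1 (proj2 (proj1 (FP _ F2))) p p' k); auto.
    + apply (proj1 (proj2 (proj1 (FP _ F1))) p p' k); auto.
  - intros x y. rewrite !DU. split.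
    + intros [[S1 F1 [k1 H1]] [S2 F2 [k2 H2]]].
      destruct (Fc _ _ F1 F2) as [E|E].
      * destruct (proj1 (proj1 (proj2 (proj2 (proj1 (FP _ F2)))) x y)) as [k Hk].
        { split; [exists k1|exists k2]; auto. }
        exists k, S2; auto.
      * destruct (proj1 (proj1 (proj2 (proj2 (proj1 (FP _ F1)))) x y)) as [k Hk].
        { split; [exists k1|exists k2]; auto. }
        exists k, S1; auto.
    + intros [k [S FS H]].
      destruct (proj2 (proj1 (proj2 (proj2 (proj1 (FP _ FS)))) x y)) as [Hx Hy].
      { eauto. }
      split; exists S; auto.
  - intros p k [S FS H]. apply DU. exists S; auto.
    apply (proj2 (proj2 (proj2 (proj1 (FP _ FS)))) p k H).
  - destruct (classic (exists2 S, F S & forall z, S0 z -> S z)) as [[S FS HS]|N].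
    + right. intros z Hz. exists S; auto.
    + left. intros z [S FS H].
      destruct (proj2 (FP _ FS)) as [E|E].
      * eapply E; eauto.
      * apply N; eauto.
Qed.


Lemma sq_inj : exists m : I*I -> I, inj m.
Proof.
  destruct (zorn PS PS_chain) as [A [PA M]].
  assert (S0A : forall z, S0 z -> A z).
  { destruct (proj2 PA) as [E|E]; auto.
    intros z Hz. apply (M S0); auto.
    - intros t Ht; exfalso; eapply E; eauto.
    - split; [apply inv_S0| right; auto]. }
  destruct PA as [[Af [Ai [Ad Ar]]] _].
  set (D := Dm A).
  assert (De : forall a, D (e a)).
  { intro a. exists (e (to_nat (a,a))). apply S0A. exists a, a. reflexivity. }
  set (g := fun a b => epsilon inh (fun k => A ((a,b),k))).
  assert (gA : forall a b, D a -> D b -> A ((a,b), g a b)).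
  { intros a b Ha Hb. unfold g. apply epsilon_spec. apply Ad. auto. }
  assert (gD : forall a b, D a -> D b -> D (g a b)).
  { intros. eapply Ar. apply gA; auto. }
  assert (ginj : forall a b a' b', D a -> D b -> D a' -> D b' -> g a b = g a' b' -> a = a' /\ b = b').
  { intros a b a' b' Ha Hb Ha' Hb' E. assert (H1 := gA a b Ha Hb). assert (H2 := gA a' b' Ha' Hb').
    rewrite E in H1. assert (HH := Ai _ _ _ H1 H2). injection HH; auto. }
  assert (e01 : e 0 <> e 1) by (intro E; apply e_inj in E; discriminate).
  assert (Nh : ~ exists h : I -> I, (forall x, D x -> ~ D (h x)) /\ (forall x y, D x -> D y -> h x = h y -> x = y)).
  { intros [h [hD hi]].
    set (D' := fun x => D x \/ exists u, D u /\ x = h u).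
    set (hinv := fun y => epsilon inh (fun u => D u /\ h u = y)).
    set (uu := fun x => if excluded_middle_informative (D x) then x else hinv x).
    set (tg := fun x y => if excluded_middle_informative (D x) then e 0 else if excluded_middle_informative (D y) then e 1 else e 2).
    set (phi := fun x y => g (g (tg x y) (uu x)) (uu y)).
    assert (uD : forall x, D' x -> D (uu x)).
    { intros x Hx. unfold uu. destruct (excluded_middle_informative (D x)); auto.
      destruct Hx as [Hx|Hx]; [contradiction|]. unfold hinv.
      apply (epsilon_spec inh (fun u => D u /\ h u = x)). destruct Hx as [u [Hu ->]]. eauto. }
    assert (uh : forall x, D' x -> ~ D x -> h (uu x) = x).
    { intros x Hx nx. unfold uu. destruct (excluded_middle_informative (D x)); [contradiction|].
      destruct Hx as [Hx|Hx]; [contradiction|]. unfold hinv.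
      apply (epsilon_spec inh (fun u => D u /\ h u = x)). destruct Hx as [u [Hu ->]]. eauto. }
    assert (ux : forall x, D x -> uu x = x).
    { intros x Hx. unfold uu. destruct (excluded_middle_informative (D x)); auto; contradiction. }
    assert (tgD : forall x y, D (tg x y)).
    { intros. unfold tg. repeat destruct excluded_middle_informative; auto. }
    assert (phiD : forall x y, D' x -> D' y -> D (phi x y)).
    { intros. unfold phi. auto. }
    assert (phi_inj : forall x y x' y', D' x -> D' y -> D' x' -> D' y' -> ~ (D x /\ D y) -> ~ (D x' /\ D y') -> phi x y = phi x' y' -> x = x' /\ y = y').
    { intros x y x' y' Hx Hy Hx' Hy' N N' E. unfold phi in E.
      apply ginj in E; auto. destruct E as [E1 E2]. apply ginj in E1; auto. destruct E1 as [E0 E1].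
      assert (DX : (D x <-> D x') /\ (D y <-> D y')).
      { unfold tg in E0; destruct (excluded_middle_informative (D x));
        destruct (excluded_middle_informative (D y));
        destruct (excluded_middle_informative (D x'));
        destruct (excluded_middle_informative (D y'));
        try (apply e_inj in E0; discriminate); try tauto. }
      split.
      - destruct (classic (D x)) as [d|d].
        + rewrite (ux x d), (ux x') in E1; tauto.
        + rewrite <- (uh x Hx d), <- (uh x' Hx'); [congruence|tauto].
      - destruct (classic (D y)) as [d|d].
        + rewrite (ux y d), (ux y') in E2; tauto.
        + rewrite <- (uh y Hy d), <- (uh y' Hy'); [congruence|tauto]. }
    set (A' := fun z : (I*I)*I => A z \/ (D' (fst (fst z)) /\ D' (snd (fst z)) /\ ~(D (fst (fst z)) /\ D (snd (fst z))) /\ snd z = h (phi (fst (fst z)) (snd (fst z))))).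
    assert (DmA' : forall x, Dm A' x <-> D' x).
    { intro x; split.
      - intros [k [H|[H1 _]]]; [left; exists k; auto| exact H1].
      - intros [Hx|Hx].
        + exists (g x x); left; apply gA; auto.
        + assert (nx : ~ D x) by (destruct Hx as [u [Hu ->]]; apply hD; auto).
          exists (h (phi x x)); right; simpl; unfold D'; tauto. }
    assert (PA' : PS A').
    { split; [split; [|split; [|split]]|].
      - intros [x y] k k' [H|H] [H'|H'].
        + eapply Af; eauto.
        + exfalso. simpl in H'. apply (proj2 (proj2 H')). apply Ad. eauto.
        + exfalso. simpl in H. apply (proj2 (proj2 H)). apply Ad. eauto.
        + simpl in H, H'. destruct H as [_ [_ [_ ->]]]. destruct H' as [_ [_ [_ ->]]]. reflexivity.
      - intros [x y] [x' y'] k [H|H] [H'|H'].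
        + eapply Ai; eauto.
        + exfalso. simpl in H'. destruct H' as [a1 [a2 [a3 a4]]]. subst k.
          apply (hD _ (phiD _ _ a1 a2)). eapply Ar; eauto.
        + exfalso. simpl in H. destruct H as [a1 [a2 [a3 a4]]]. subst k.
          apply (hD _ (phiD _ _ a1 a2)). eapply Ar; eauto.
        + simpl in H, H'. destruct H as [a1 [a2 [a3 a4]]]. destruct H' as [b1 [b2 [b3 b4]]].
          rewrite a4 in b4. apply hi in b4; auto.
          destruct (phi_inj _ _ _ _ a1 a2 b1 b2 a3 b3 b4). subst; reflexivity.
      - intros x y. rewrite !DmA'. split.
        + intros [Hx Hy]. destruct (classic (D x /\ D y)) as [d|d].
          * destruct (proj1 (Ad x y) d) as [k Hk]. exists k. left; auto.
          * exists (h (phi x y)). right. simpl. tauto.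
        + intros [k [H|H]].
          * destruct (proj2 (Ad x y) (ex_intro _ k H)). unfold D'; tauto.
          * simpl in H. tauto.
      - intros [x y] k [H|H].
        + apply DmA'. left. eapply Ar; eauto.
        + simpl in H. destruct H as [a1 [a2 [a3 a4]]]. apply DmA'. right.
          exists (phi x y). split; auto.
      - right. intros z Hz. left. auto. }
    assert (AA' : forall t, A t -> A' t) by (intros; left; auto).
    assert (HA := M A' AA' PA').
    assert (nD : ~ D (h (e 0))) by (apply hD; auto).
    assert (HH : A' ((e 0, h (e 0)), h (phi (e 0) (h (e 0))))).
    { right. simpl. unfold D'. split; [left; auto|]. split; [right; exists (e 0); auto|]. tauto. }
    apply HA in HH. apply nD. destruct (proj2 (Ad _ _) (ex_intro _ _ HH)); auto. }
  destruct (comparable {x | D x} {x | ~ D x}) as [[j jinj]|[k kinj]].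
  - exfalso; apply Nh.
    exists (fun x => match excluded_middle_informative (D x) with left Hx => proj1_sig (j (exist _ x Hx)) | right _ => x end).
    split.
    + intros x Hx; destruct (excluded_middle_informative (D x)); [|contradiction]. exact (proj2_sig (j _)).
    + intros x y Hx Hy E. destruct (excluded_middle_informative (D x)); [|contradiction].
      destruct (excluded_middle_informative (D y)); [|contradiction].
      assert (HH : exist _ x d = exist (fun x => D x) y d0).
      { apply jinj. destruct (j (exist _ x d)), (j (exist _ y d0)); simpl in E; subst.
        f_equal; apply proof_irrelevance. }
      injection HH; auto.
  - set (w := fun x => match excluded_middle_informative (D x) with left _ => (e 0, x) | right nx => (e 1, proj1_sig (k (exist _ x nx))) end).
    assert (wD : forall x, D (fst (w x)) /\ D (snd (w x))).
    { intro x. unfold w. destruct (excluded_middle_informative (D x)); simpl; auto.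
      split; auto. exact (proj2_sig (k _)). }
    assert (winj : inj w).
    { intros x y E. unfold w in E. destruct (excluded_middle_informative (D x));
      destruct (excluded_middle_informative (D y)); pose proof (f_equal fst E) as E2; pose proof (f_equal snd E) as E1; simpl in E1, E2.
      all: try congruence.
      all: try (exfalso; apply e01; congruence).
      assert (HH : exist _ x n = exist (fun x => ~ D x) y n0).
      { apply kinj. destruct (k (exist _ x n)), (k (exist _ y n0)); simpl in E1; subst.
        f_equal; apply proof_irrelevance. }
      injection HH; auto. }
    exists (fun p => g (g (fst (w (fst p))) (snd (w (fst p)))) (g (fst (w (snd p))) (snd (w (snd p))))).
    intros [a b] [a' b'] E. simpl in E.
    destruct (wD a), (wD b), (wD a'), (wD b').
    apply ginj in E; auto. destruct E as [E1 E2].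
    apply ginj in E1; auto. apply ginj in E2; auto.
    destruct E1, E2.
    rewrite (winj a a'); [rewrite (winj b b')|]; auto.
    + destruct (w b), (w b'); simpl in *; congruence.
    + destruct (w a), (w a'); simpl in *; congruence.
Qed.

End Sq.

Lemma sig_inj {A} {P : A -> Prop} (a b : {x | P x}) : proj1_sig a = proj1_sig b -> a = b.
Proof. destruct a, b; simpl; intros; subst; f_equal; apply proof_irrelevance. Qed.

Lemma C_in_D {P} (le : P -> P -> Prop) D pbar q r :
  nonprincipal_ultrafilter D -> forces_W_in_Fplus le D pbar q -> le r q ->
  D (fun n => compat le r (pbar n)).
Proof.
  intros [_ [_ U]] H Hr. destruct (U (fun n => compat le r (pbar n))) as [C|C]; auto.
  destruct (H _ C r Hr) as [n [H1 H2]]. contradiction.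
Qed.

Lemma prod_linked {P0 P1} (le0 : P0 -> P0 -> Prop) (le1 : P1 -> P1 -> Prop) D Q0 Q1 :
  nonprincipal_ultrafilter D -> F_linked le0 D Q0 -> F_linked le1 D Q1 ->
  F_linked (prod_le le0 le1) D (setX Q0 Q1).
Proof.
  intros UD L0 L1 pbar Hp.
  destruct (L0 (fun n => fst (pbar n))) as [q0 H0]; [intro n; apply (Hp n)|].
  destruct (L1 (fun n => snd (pbar n))) as [q1 H1]; [intro n; apply (Hp n)|].
  exists (q0, q1). intros a Da r [r0 r1].
  assert (C0 := C_in_D _ _ _ _ _ UD H0 r0).
  assert (C1 := C_in_D _ _ _ _ _ UD H1 r1).
  destruct UD as [[FT [FF [Fup Fint]]] _].
  assert (Dall := Fint _ _ Da (Fint _ _ C0 C1)).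
  apply NNPP; intro N. apply FF. apply (Fup _ _ Dall).
  intros n [an [[s0 [s01 s02]] [s1 [s11 s12]]]]. apply N. exists n. split; auto.
  exists (s0, s1). split; split; simpl; auto.
Qed.

Lemma sub_linked {P} (le : P -> P -> Prop) D (Q Q' : P -> Prop) :
  (forall p, Q' p -> Q p) -> F_linked le D Q -> F_linked le D Q'.
Proof. intros S L pbar Hp. apply L. auto. Qed.

Lemma single_linked {P} (le : P -> P -> Prop) D y :
  is_poset le -> nonprincipal_ultrafilter D -> F_linked le D (fun p => p = y).
Proof.
  intros [refl _] [[FT [FF [Fup Fint]]] _] pbar Hp. exists y. intros a Da r Hr.
  apply NNPP; intro N. apply FF. apply (Fup _ _ Da). intros n an. apply N.
  exists n. split; auto. exists r. rewrite Hp. auto.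
Qed.

Lemma reg_split Th : regular_type Th -> forall Y (g : Th -> Y),
  (exists s : Th -> Th, inj s /\ inj (fun t => g (s t))) \/
  (exists y (s : Th -> Th), inj s /\ forall t, g (s t) = y).
Proof.
  intros [[e einj] R] Y g. assert (inh : inhabited Th) by exact (inhabits (e 0)).
  destruct (classic (card_le Th {y | exists t, g t = y})) as [[r rinj]|N].
  - left. set (s := fun t => epsilon inh (fun t' => g t' = proj1_sig (r t))).
    assert (gs : forall t, g (s t) = proj1_sig (r t)).
    { intro t. unfold s. apply (epsilon_spec inh (fun t' => g t' = proj1_sig (r t))).
      exact (proj2_sig (r t)). }
    assert (gsi : inj (fun t => g (s t))).
    { intros a b E. simpl in E. rewrite !gs in E. apply rinj, sig_inj; auto. }
    exists s. split; auto. intros a b E. apply gsi. simpl. congruence.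
  - set (J := {y | exists t, g t = y}).
    assert (LJ : card_lt J Th).
    { split; auto.
      exists (fun j => epsilon inh (fun t => g t = proj1_sig j)).
      intros a b E. apply sig_inj.
      assert (Ha := epsilon_spec inh (fun t => g t = proj1_sig a) (proj2_sig a)).
      assert (Hb := epsilon_spec inh (fun t => g t = proj1_sig b) (proj2_sig b)).
      simpl in *. rewrite E in Ha. congruence. }
    destruct (classic (forall j : J, card_lt {t | g t = proj1_sig j} Th)) as [A|A].
    + destruct (R J (fun j t => g t = proj1_sig j) LJ A) as [t Ht].
      exfalso. apply (Ht (exist _ (g t) (ex_intro _ t eq_refl))). reflexivity.
    + apply not_all_ex_not in A as [j Hj].
      assert (Hc : card_le Th {t | g t = proj1_sig j}).
      { apply NNPP; intro N2. apply Hj. split; auto.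
        exists (fun x => proj1_sig x). intros a b E; apply sig_inj; auto. }
      destruct Hc as [r rinj]. right. exists (proj1_sig j), (fun t => proj1_sig (r t)).
      split.
      * intros a b E. apply rinj, sig_inj; auto.
      * intro t. exact (proj2_sig (r t)).
Qed.

Lemma knaster_step {P} (L0 : (P -> Prop) -> Prop) Th :
  theta_Knaster L0 Th -> inhabited Th -> forall u : Th -> P, inj u ->
  exists B0 (tau : Th -> Th), L0 B0 /\ inj tau /\ forall t, B0 (u (tau t)).
Proof.
  intros K inh u uinj.
  destruct (K (fun p => exists t, u t = p)) as [B0 [sub [[b0 [b0inj b0iff]] LB]]].
  { exists u. split; auto. intro; tauto. }
  assert (Hb : forall t, exists t', u t' = b0 t).
  { intro t. apply sub. apply b0iff. eauto. }
  set (tau := fun t => epsilon inh (fun t' => u t' = b0 t)).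
  assert (ut : forall t, u (tau t) = b0 t).
  { intro t. apply (epsilon_spec inh (fun t' => u t' = b0 t)). apply Hb. }
  exists B0, tau. split; auto. split.
  - intros a b E. apply b0inj. rewrite <- !ut. congruence.
  - intro t. rewrite ut. apply b0iff. eauto.
Qed.

Lemma knaster_prod {P0 P1} (L0 : (P0 -> Prop) -> Prop) (L1 : (P1 -> Prop) -> Prop)
  (L : (P0 * P1 -> Prop) -> Prop) Th :
  regular_type Th ->
  (forall Q0 Q1, L0 Q0 -> L1 Q1 -> L (setX Q0 Q1)) ->
  (forall y, L0 (fun p => p = y)) -> (forall y, L1 (fun p => p = y)) ->
  (forall Q Q', (forall p, Q' p -> Q p) -> L Q -> L Q') ->
  theta_Knaster L0 Th -> theta_Knaster L1 Th -> theta_Knaster L Th.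
Proof.
  intros RT Lp S0 S1 Ld K0 K1 A [f [finj fiff]].
  assert (inh : inhabited Th) by (destruct RT as [[e _] _]; exact (inhabits (e 0))).
  assert (fin : forall (F : Th -> P0 * P1) X0 X1, inj F -> (forall t, exists t', f t' = F t) ->
     (forall t, X0 (fst (F t))) -> (forall t, X1 (snd (F t))) -> L0 X0 -> L1 X1 ->
     exists B, (forall p, B p -> A p) /\ has_size B Th /\ L B).
  { intros F X0 X1 Fi Ff H0 H1 L0X L1X. exists (fun p => exists t, F t = p). split; [|split].
    - intros p [t <-]. apply fiff. apply Ff.
    - exists F. split; auto. intro; tauto.
    - apply (Ld (setX X0 X1)); auto. intros p [t <-]. split; auto. }
  destruct (reg_split Th RT _ (fun t => fst (f t))) as [[s [sinj fsinj]] | [y0 [s [sinj fsc]]]].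
  - destruct (knaster_step L0 Th K0 inh _ fsinj) as [B0 [tau [LB0 [tinj HB0]]]].
    set (f' := fun t => f (s (tau t))).
    destruct (reg_split Th RT _ (fun t => snd (f' t))) as [[s' [sinj' fsinj']] | [y1 [s' [sinj' fsc']]]].
    + destruct (knaster_step L1 Th K1 inh _ fsinj') as [B1 [tau' [LB1 [tinj' HB1]]]].
      apply (fin (fun t => f' (s' (tau' t))) B0 B1); auto.
      * intros a b E. unfold f' in E. apply tinj', sinj', tinj, sinj, finj; auto.
      * intro t. eexists; reflexivity.
      * intro t. unfold f'. apply HB0.
    + apply (fin (fun t => f' (s' t)) B0 (fun p => p = y1)); auto.
      * intros a b E. unfold f' in E. apply sinj', tinj, sinj, finj; auto.
      * intro t. eexists; reflexivity.
      * intro t. unfold f'. apply HB0.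
  - assert (ui : inj (fun t => snd (f (s t)))).
    { intros a b E. simpl in E. apply sinj, finj.
      rewrite (surjective_pairing (f (s a))), (surjective_pairing (f (s b))), !fsc, E. reflexivity. }
    destruct (knaster_step L1 Th K1 inh _ ui) as [B1 [tau [LB1 [tinj HB1]]]].
    apply (fin (fun t => f (s (tau t))) (fun p => p = y0) B1); auto.
    + intros a b E. apply tinj, sinj, finj; auto.
    + intro t. eexists; reflexivity.
Qed.

Lemma mu_prod {P0 P1} (L0 : (P0 -> Prop) -> Prop) (L1 : (P1 -> Prop) -> Prop)
  (L : (P0 * P1 -> Prop) -> Prop) I :
  (forall Q0 Q1, L0 Q0 -> L1 Q1 -> L (setX Q0 Q1)) ->
  infinite_type I -> mu_linked L0 I -> mu_linked L1 I -> mu_linked L I.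
Proof.
  intros Lp [e einj] [Qs0 [H0 C0]] [Qs1 [H1 C1]].
  destruct (sq_inj I e einj) as [m minj].
  set (minv := fun k => epsilon (inhabits (e 0, e 0)) (fun p => m p = k)).
  exists (fun k => setX (Qs0 (fst (minv k))) (Qs1 (snd (minv k)))). split.
  - intro k. apply Lp; auto.
  - intros p. destruct (C0 (fst p)) as [i Hi]. destruct (C1 (snd p)) as [j Hj].
    exists (m (i,j)).
    assert (E : minv (m (i,j)) = (i,j)).
    { apply minj. unfold minv.
      apply (epsilon_spec (inhabits (e 0, e 0)) (fun p => m p = m (i,j))). eauto. }
    rewrite E. split; auto.
Qed.

Theorem theorem3p19 :
  forall (P0 : Type) (le0 : P0 -> P0 -> Prop) (P1 : Type) (le1 : P1 -> P1 -> Prop),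
  is_poset le0 -> is_poset le1 ->
  (forall D : (nat -> Prop) -> Prop, nonprincipal_ultrafilter D ->
     (forall (Q0 : P0 -> Prop) (Q1 : P1 -> Prop),
        F_linked le0 D Q0 -> F_linked le1 D Q1 ->
        F_linked (prod_le le0 le1) D (setX Q0 Q1)) /\
     (forall I : Type, infinite_type I ->
        mu_linked (F_linked le0 D) I -> mu_linked (F_linked le1 D) I ->
        mu_linked (F_linked (prod_le le0 le1) D) I) /\
     (forall Th : Type, regular_type Th ->
        theta_Knaster (F_linked le0 D) Th -> theta_Knaster (F_linked le1 D) Th ->
        theta_Knaster (F_linked (prod_le le0 le1) D) Th)) /\
  ((forall (Q0 : P0 -> Prop) (Q1 : P1 -> Prop),
      uf_linked le0 Q0 -> uf_linked le1 Q1 ->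
      uf_linked (prod_le le0 le1) (setX Q0 Q1)) /\
   (forall I : Type, infinite_type I ->
      mu_linked (uf_linked le0) I -> mu_linked (uf_linked le1) I ->
      mu_linked (uf_linked (prod_le le0 le1)) I) /\
   (forall Th : Type, regular_type Th ->
      theta_Knaster (uf_linked le0) Th -> theta_Knaster (uf_linked le1) Th ->
      theta_Knaster (uf_linked (prod_le le0 le1)) Th)).
Proof.
  intros P0 le0 P1 le1 H0 H1.
  assert (UP : forall Q0 Q1, uf_linked le0 Q0 -> uf_linked le1 Q1 ->
      uf_linked (prod_le le0 le1) (setX Q0 Q1)).
  { intros Q0 Q1 L0 L1 D UD. apply prod_linked; auto. }
  split.
  - intros D UD. split; [|split].
    + intros; apply prod_linked; auto.
    + intros I II. apply mu_prod; auto. intros; apply prod_linked; auto.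
    + intros Th RT. apply knaster_prod; auto.
      * intros; apply prod_linked; auto.
      * intro; apply single_linked; auto.
      * intro; apply single_linked; auto.
      * intros; eapply sub_linked; eauto.
  - split; [|split]; auto.
    + intros I II. apply mu_prod; auto.
    + intros Th RT. apply knaster_prod; auto.
      * intros y D UD; apply single_linked; auto.
      * intros y D UD; apply single_linked; auto.
      * intros Q Q' S L D UD. eapply sub_linked; eauto.
Qed.
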